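(* Let $\mathbb{T}$ be a time scale and $\alpha\in(0,1]$. Suppose $f:\mathbb{T}\to\mathbb{R}$ is strictly increasing, $\tilde{\mathbb{T}}:=\mathrm{Ran}(f)$ is a time scale, and $f$ is continuously nabla fractional differentiable of order $1$ at each point of $\mathbb{T}^k$. If $f^{-1}:\tilde{\mathbb{T}}\to\mathbb{T}$ exists, then for $t\in\tilde{\mathbb{T}}^k$ with $\big(\nabla^{(1)}f\big)(f^{-1}(t))\neq 0$, $$\nabla^{(\alpha)}f^{-1}(t)=\begin{cases}\dfrac{(\nu(t))^{1-\alpha}}{\big(\nabla^{(1)}f\big)(f^{-1}(t))} & \text{if } \alpha\neq 1,\\[2ex] \dfrac{1}{\big(\nabla^{(1)}f\big)(f^{-1}(t))} & \text{if } \alpha=1,\end{cases}$$ where $\nu$ and $\nabla^{(\alpha)}f^{-1}$ are computed on the time scale $\tilde{\mathbb{T}}$ and $\nabla^{(1)}f$ on $\mathbb{T}$.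
   Context: A time scale is a nonempty closed subset of $\mathbb{R}$ with the relative topology. On a time scale $\mathbb{S}$, for $t\in\mathbb{S}$: $\rho(t)=\sup\{s\in\mathbb{S}:s<t\}$, $\sigma(t)=\inf\{s\in\mathbb{S}:s>t\}$, $\nu(t)=t-\rho(t)$. If $\mathbb{S}$ has a minimum $m$ with $\sigma(m)>m$ then $\mathbb{S}^k=\mathbb{S}\setminus\{m\}$, else $\mathbb{S}^k=\mathbb{S}$. $U_\delta(t)=(t-\delta,t+\delta)\cap\mathbb{S}$, $U^-_\delta(t)=(t-\delta,t)\cap\mathbb{S}$. Let $Q=\{1/q: q \text{ an odd positive integer}\}$; for $\alpha\in Q$, $x^\alpha$ is the real $q$-th root. Definition: $h:\mathbb{S}\to\mathbb{R}$ is nabla fractional differentiable of order $\alpha$ at $t\in\mathbb{S}^k$ if there is $L\in\mathbb{R}$ such that for every $\varepsilon>0$ there is $\delta>0$ with $|[h(\rho(t))-h(s)]-L[\rho(t)-s]^\alpha|\le\varepsilon|\rho(t)-s|^\alpha$ for all $s\in U_\delta(t)$ if $\alpha\in Q$, resp. all $s\in U^-_\delta(t)$ if $\alpha\notin Q$; then $\nabla^{(\alpha)}h(t):=L$. ''Continuously nabla fractional differentiable of order $1$ at each point of $\mathbb{T}^k$'' means nabla fractional differentiable of order $1$ at every point of $\mathbb{T}^k$ with $\nabla^{(1)}f$ continuous there. *)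

(* Defs.v *)
From HB Require Import structures.
From mathcomp Require Import all_boot all_order all_algebra.
From mathcomp Require Import all_classical all_reals all_analysis.
Set Implicit Arguments. Unset Strict Implicit. Unset Printing Implicit Defensive.
Import Order.TTheory GRing.Theory Num.Theory.
Import numFieldNormedType.Exports.
Local Open Scope classical_set_scope.
Local Open Scope ring_scope.

Section TimeScale.
Variable R : realType.

Definition time_scale (S : set R) : Prop := S !=set0 /\ closed S.

(* backward jump: sup{s in S | s < t}, with the standard convention
   sup (empty) := t (i.e. rho(min S) = min S) *)
Definition rho (S : set R) (t : R) : R :=
  if `[< exists s, S s /\ s < t >] then sup [set s | S s /\ s < t] else t.

Definition sigma (S : set R) (t : R) : R :=
  if `[< exists s, S s /\ t < s >] then inf [set s | S s /\ t < s] else t.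

Definition nu (S : set R) (t : R) : R := t - rho S t.

Definition is_min (S : set R) (m : R) : Prop := S m /\ forall s, S s -> m <= s.

Definition Tk (S : set R) : set R :=
  [set t | S t /\ ~ (is_min S t /\ t < sigma S t)].

Definition U (S : set R) (d t : R) : set R := [set s | S s /\ t - d < s < t + d].
Definition Um (S : set R) (d t : R) : set R := [set s | S s /\ t - d < s < t].

Definition inQ (a : R) : Prop := exists q : nat, odd q /\ a = (q%:R)^-1.

(* x^a : for a = 1/q in Q, the real q-th root (sign(x) * |x|^(1/q));
   otherwise the usual power (only used on nonnegative arguments) *)
Definition fpow (a x : R) : R :=
  if `[< inQ a >] then Num.sg x * powR `|x| a else powR x a.

Definition nabla_frac_deriv (S : set R) (a : R) (h : R -> R) (t L : R) : Prop :=
  Tk S t /\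
  forall eps : R, 0 < eps -> exists2 d : R, 0 < d &
    forall s, (if `[< inQ a >] then U S d t s else Um S d t s) ->
      `| (h (rho S t) - h s) - L * fpow a (rho S t - s) |
        <= eps * fpow a `|rho S t - s|.

Definition cont_on (A : set R) (g : R -> R) : Prop :=
  forall t, A t -> forall eps : R, 0 < eps -> exists2 d : R, 0 < d &
    forall s, A s -> `|s - t| < d -> `|g s - g t| < eps.

End TimeScale.

(* Main.v *)
Require Import Defs.
From HB Require Import structures.
From mathcomp Require Import all_boot all_order all_algebra.
From mathcomp Require Import all_classical all_reals all_analysis.
From mathcomp Require Import ring lra.
Import Order.TTheory GRing.Theory Num.Theory.
Import numFieldNormedType.Exports.
Local Open Scope classical_set_scope.
Local Open Scope ring_scope.

Set Implicit Arguments.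
Section Helpers.
Variable R : realType.
Implicit Types (T E : set R) (f : R -> R).

Lemma cl_sup T E : closed T -> E `<=` T -> E !=set0 -> has_ubound E -> T (sup E).
Proof.
move=> cT ET E0 ub; apply: cT; apply: (closureS ET).
exact: closure_sup.
Qed.

Lemma cl_inf T E : closed T -> E `<=` T -> E !=set0 -> has_lbound E -> T (inf E).
Proof.
move=> cT ET E0 lb; apply: cT; apply: (closureS ET).
move=> U /nbhs_ballP[_ /posnumP[e] infeU].
have [y Ey yle] := inf_adherent (gt0 e) (conj E0 lb).
exists y; split => //; apply: infeU.
have := ge_inf lb Ey => iy.
rewrite /ball /= ler0_norm ?subr_le0 //; lra.
Qed.

Lemma inQ1 : inQ (1 : R).
Proof. by exists 1%N; rewrite invr1. Qed.

Lemma fpow1 (z : R) : fpow 1 z = z.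
Proof.
rewrite /fpow asboolT; last exact: inQ1.
by rewrite powRr1 // -numEsg.
Qed.

Lemma fpow_abs (a z : R) : 0 < a -> fpow a `|z| = powR `|z| a.
Proof.
move=> a0; rewrite /fpow; case: asboolP => // _.
rewrite normr_id sgr_norm; have [->|nz] := eqVneq z 0.
  by rewrite normr0 powR0 ?mulr0 // gt_eqF.
by rewrite mul1r.
Qed.

Lemma fpow_neg (a z : R) : inQ a -> z < 0 -> fpow a z = - powR (- z) a.
Proof.
move=> qa z0; rewrite /fpow asboolT // ltr0_sg // ltr0_norm //.
by rewrite mulN1r.
Qed.

Lemma mono_le T f : (forall x y, T x -> T y -> x < y -> f x < f y) ->
  forall a b, T a -> T b -> a <= b -> f a <= f b.
Proof.
move=> inc a b Ta Tb; rewrite le_eqVlt => /orP[/eqP->//|ab].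
exact/ltW/inc.
Qed.
Arguments mono_le {T f} inc {a b}.

Lemma mono_lt T f : (forall x y, T x -> T y -> x < y -> f x < f y) ->
  forall a b, T a -> T b -> f a < f b -> a < b.
Proof.
move=> inc a b Ta Tb fab; rewrite ltNge; apply/negP => ba.
by have := mono_le inc Tb Ta ba; rewrite leNgt fab.
Qed.
Arguments mono_lt {T f} inc {a b}.

Lemma finv_cont T f x eta : closed T ->
  (forall x y, T x -> T y -> x < y -> f x < f y) -> T x -> 0 < eta ->
  exists2 d, 0 < d & forall y, T y -> `|f y - f x| < d -> `|y - x| < eta.
Proof.
move=> cT inc Tx e0.
have [dR dR0 HR] : exists2 dR, 0 < dR &
    forall y, T y -> x + eta <= y -> f x + dR <= f y.
  pose B := [set y | T y /\ x + eta <= y].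
  have [B0|B0] := pselect (B !=set0); last first.
    exists 1 => // y Ty ye; exfalso; apply: B0; by exists y.
  have lbB : has_lbound B by exists (x + eta) => y [].
  have Tm : T (inf B) by apply: cl_inf => // y [].
  have mge : x + eta <= inf B by apply: lb_le_inf => // y [].
  exists (f (inf B) - f x).
    by rewrite subr_gt0; apply: inc => //; lra.
  move=> y Ty ye; have : inf B <= y by apply: ge_inf => //.
  move/(mono_le inc Tm Ty); lra.
have [dL dL0 HL] : exists2 dL, 0 < dL &
    forall y, T y -> y <= x - eta -> f y <= f x - dL.
  pose B := [set y | T y /\ y <= x - eta].
  have [B0|B0] := pselect (B !=set0); last first.
    exists 1 => // y Ty ye; exfalso; apply: B0; by exists y.
  have ubB : has_ubound B by exists (x - eta) => y [].
  have Tm : T (sup B) by apply: cl_sup => // y [].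
  have mle : sup B <= x - eta by apply: ge_sup => // y [].
  exists (f x - f (sup B)).
    by rewrite subr_gt0; apply: inc => //; lra.
  move=> y Ty ye; have : y <= sup B by apply: sup_upper_bound => //.
  move/(mono_le inc Ty Tm); lra.
exists (Num.min dL dR); first by rewrite lt_min dL0.
move=> y Ty; rewrite lt_min => /andP[hL hR].
have [h|h] := leP y (x - eta).
  have h2 := HL y Ty h; move: hL; rewrite ltr_distlC; lra.
have [h'|h'] := leP (x + eta) y.
  have h2 := HR y Ty h'; move: hR; rewrite ltr_distlC; lra.
rewrite ltr_distlC; apply/andP; split; lra.
Qed.

End Helpers.
Arguments mono_le {R T f} inc {a b}.
Arguments mono_lt {R T f} inc {a b}.
Arguments finv_cont {R T} f x {eta}.

Theorem mainTheorem9 (R : realType) (T : set R) (alpha : R) (f finv df : R -> R) :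
  time_scale T ->
  0 < alpha <= 1 ->
  (forall x y, T x -> T y -> x < y -> f x < f y) ->
  time_scale (f @` T) ->
  (forall t, Tk T t -> nabla_frac_deriv T 1 f t (df t)) ->
  cont_on (Tk T) df ->
  (forall x, T x -> finv (f x) = x) ->
  forall t, Tk (f @` T) t -> df (finv t) != 0 ->
    nabla_frac_deriv (f @` T) alpha finv t
      (if alpha != 1 then powR (nu (f @` T) t) (1 - alpha) / df (finv t)
       else 1 / df (finv t)).
Proof.
move=> [T0 cT] /andP[a0 a1] inc [_ cS] Hd _ Hinv t Tkt dn0.
have [[x Tx xt] nT] := Tkt.
subst t.
rewrite Hinv // in dn0 *.
set S := f @` T in Tkt nT *.
set D := df x in dn0 *.
have TkTx : Tk T x.
  split => // -[[_ minx] xs]; apply: nT; split.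
    split; first by exists x.
    move=> s [z Tz <-]; apply: (mono_le inc Tx Tz); exact: minx.
  move: xs; rewrite /sigma; case: asboolP => [[s0 [Ts0 xs0]] | _]; last by rewrite ltxx.
  set A := [set s | T s /\ x < s].
  have lbA : has_lbound A by exists x => y [_ /ltW].
  have A0 : A !=set0 by exists s0.
  have Tm : T (inf A) by apply: cl_inf => // y [].
  move=> xm.
  have ex' : exists s, S s /\ f x < s by exists (f s0); split; [exists s0 | exact: inc].
  rewrite asboolT //.
  apply: (lt_le_trans (inc _ _ Tx Tm xm)).
  apply: lb_le_inf => //.
  move=> _ [[y Ty <-] fxy]; apply: (mono_le inc Tm Ty); apply: ge_inf => //; split => //.
  exact: (mono_lt inc Tx Ty fxy).
have [_ Hf] := Hd x TkTx.
have H1 : forall eps, 0 < eps -> exists2 d, 0 < d & forall s, T s -> `|s - x| < d ->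
    `|f (rho T x) - f s - D * (rho T x - s)| <= eps * `|rho T x - s|.
  move=> eps e0; have [d d0 Hd'] := Hf eps e0; exists d => // s Ts sx.
  have := Hd' s; rewrite asboolT; last exact: inQ1.
  rewrite !fpow1; apply; split => //; rewrite -ltr_distlC distrC //.
have Hrho : (rho T x = x /\ rho S (f x) = f x) \/
    exists r, [/\ T r, r < x, rho T x = r, rho S (f x) = f r &
                forall z, T z -> z < x -> z <= r].
  case: (pselect (exists s, T s /\ s < x)) => [[s0 [Ts0 s0x]] | nP]; last first.
    left; rewrite /rho asboolF // asboolF //.
    move=> [_ [[z Tz <-] fzx]]; apply: nP; exists z; split => //.
    exact: (mono_lt inc Tz Tx fzx).
  set A := [set s | T s /\ s < x].
  have ubA : has_ubound A by exists x => z [_ /ltW].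
  have A0 : A !=set0 by exists s0.
  have Tr : T (sup A) by apply: cl_sup => // z [].
  have rx : sup A <= x by apply: ge_sup => // z [_ /ltW].
  have rhoT : rho T x = sup A by rewrite /rho asboolT //; exists s0.
  have ex' : exists s, S s /\ s < f x by exists (f s0); split; [exists s0 | exact: inc].
  have rhoS : rho S (f x) = sup [set s | S s /\ s < f x] by rewrite /rho asboolT.
  set B := [set s | S s /\ s < f x] in rhoS.
  have ubB : has_ubound B by exists (f x) => z [_ /ltW].
  have B0 : B !=set0 by [].
  move: rx; rewrite le_eqVlt => /orP[/eqP rx | rx].
    left; split; first by rewrite rhoT.
    rewrite rhoS; apply/eqP; rewrite eq_le; apply/andP; split.
      by apply: ge_sup => // z [_ /ltW].
    rewrite leNgt; apply/negP => hB.
    have [d d0 Hd1] := H1 1 ltr01.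
    have Dp : 0 < `|D| + 1 by rewrite ltr_wpDl.
    pose d' := Num.min d ((f x - sup B) / (`|D| + 1)).
    have d'0 : 0 < d' by rewrite lt_min d0 divr_gt0 // subr_gt0.
    have [s [Ts sx] hs] := sup_adherent d'0 (conj A0 ubA).
    have hd'1 : d' <= d by rewrite ge_min lexx.
    have hd'2 : d' <= (f x - sup B) / (`|D| + 1) by rewrite ge_min lexx orbT.
    rewrite rx in hs.
    have xs : `|s - x| < d by rewrite ltr_distlC; apply/andP; split; lra.
    have := Hd1 s Ts xs; rewrite rhoT rx => h.
    have Bfs : B (f s) by split; [exists s | exact: inc].
    have hsup := sup_upper_bound (conj B0 ubB) Bfs.
    have xs0 : 0 < x - s by lra.
    move: h; rewrite mul1r (gtr0_norm xs0) => /ler_normlP [_ h].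
    have hD := ler_norm D.
    have h3 : (`|D| + 1) * (x - s) < f x - sup B.
      by rewrite mulrC -ltr_pdivlMr //; lra.
    have h4 : D * (x - s) <= `|D| * (x - s) by rewrite ler_wpM2r // ltW.
    nra.
  right; exists (sup A); split => //.
    rewrite rhoS; apply/eqP; rewrite eq_le; apply/andP; split.
      apply: ge_sup => // _ [[z Tz <-] fzx]; apply: (mono_le inc Tz Tr).
      by apply: sup_upper_bound => //; split => //; exact: (mono_lt inc Tz Tx fzx).
    by apply: sup_upper_bound => //; split; [exists (sup A) | exact: inc].
  by move=> z Tz zx; apply: sup_upper_bound.
have Dn : 0 < `|D| by rewrite normr_gt0.
case: Hrho => [[rT rS] | [r [Tr rx rT rS hr]]].
  split => // e e0; rewrite rS Hinv //.
  have nu0 : nu S (f x) = 0 by rewrite /nu rS subrr.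
  rewrite nu0.
  suff [d d0 Hk] : exists2 d, 0 < d & forall y, T y -> `|f y - f x| < d ->
      `|x - y - (if alpha != 1 then powR 0 (1 - alpha) / D else 1 / D) *
          fpow alpha (f x - f y)| <= e * fpow alpha `|f x - f y|.
    exists d => // s; case: ifP => _ [[z Tz <-]] /andP[h1 h2]; rewrite Hinv //;
      apply: Hk => //; rewrite ltr_distlC; apply/andP; split; lra.
  have [a1eq | an1] := eqVneq alpha 1.
    subst alpha; rewrite /=.
    pose eps' := Num.min (`|D| / 2) (e * `|D| ^+ 2 / 2).
    have eps'0 : 0 < eps' by rewrite lt_min !divr_gt0 ?mulr_gt0 ?exprn_gt0.
    have he1 : eps' <= `|D| / 2 by rewrite ge_min lexx.
    have he2 : eps' <= e * `|D| ^+ 2 / 2 by rewrite ge_min lexx orbT.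
    have [d1 d10 Hd1] := H1 eps' eps'0.
    have [d d0 Hc] := finv_cont f x cT inc Tx d10.
    exists d => // y Ty hy.
    have := Hd1 y Ty (Hc y Ty hy); rewrite rT !fpow1 => h.
    have tri : `|D * (x - y)| <= `|f x - f y| + `|f x - f y - D * (x - y)|.
      have := ler_normB (f x - f y) (f x - f y - D * (x - y)).
      by rewrite opprB addrC subrK.
    rewrite normrM in tri.
    have -> : x - y - 1 / D * (f x - f y) = - (f x - f y - D * (x - y)) / D.
      by field.
    rewrite normrM normrN normfV ler_pdivrMr //.
    set a := `|x - y| in h tri *.
    set b := `|f x - f y| in tri *.
    set W := `|f x - f y - D * (x - y)| in h tri *.
    set c := `|D| in Dn he1 he2 tri *.
    have a0' : 0 <= a by apply: normr_ge0.
    have ca : c * a <= 2 * b by nra.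
    have h5 : eps' * a <= e * c ^+ 2 / 2 * a by rewrite ler_wpM2r.
    nra.
  rewrite /=.
  rewrite powR0 ?subr_eq0 1?eq_sym // mul0r.
  have a1' : alpha < 1 by rewrite lt_neqAle an1 a1.
  pose k := e * `|D| / 2.
  have k0 : 0 < k by rewrite divr_gt0 ?mulr_gt0.
  pose beta := powR k (1 - alpha)^-1.
  have beta0 : 0 < beta by apply: powR_gt0.
  have [d1 d10 Hd1] := H1 (`|D| / 2) (divr_gt0 Dn (ltr0Sn _ 1)).
  have [d2 d20 Hc] := finv_cont f x cT inc Tx d10.
  exists (Num.min d2 beta); first by rewrite lt_min d20.
  move=> y Ty; rewrite lt_min => /andP[hy hb].
  have := Hd1 y Ty (Hc y Ty hy); rewrite rT => h.
  have tri : `|D * (x - y)| <= `|f x - f y| + `|f x - f y - D * (x - y)|.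
    have := ler_normB (f x - f y) (f x - f y - D * (x - y)).
    by rewrite opprB addrC subrK.
  rewrite normrM in tri.
  rewrite mul0r subr0 fpow_abs //.
  rewrite (distrC (f y)) in hb.
  set a := `|x - y| in h tri *.
  set b := `|f x - f y| in tri hb *.
  set W := `|f x - f y - D * (x - y)| in h tri *.
  have a0' : 0 <= a by apply: normr_ge0.
  have ca : `|D| * a <= 2 * b by nra.
  have [b0|bn0] := eqVneq b 0.
    rewrite b0 in ca; have : a <= 0 by nra.
    by move=> ha; apply: (le_trans ha); apply: mulr_ge0; [exact: ltW | exact: powR_ge0].
  have bE : b = powR b alpha * powR b (1 - alpha).
    rewrite -powRD; last by apply/implyP => _.
    by rewrite addrC subrK powRr1 // normr_ge0.
  have Qk : powR b (1 - alpha) <= k.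
    have -> : k = powR beta (1 - alpha).
      by rewrite /beta -powRrM mulVf ?powRr1 ?ltW // subr_eq0 eq_sym lt_eqF.
    apply: ge0_ler_powR; rewrite ?subr_ge0 ?ltW //.
    by rewrite nnegrE normr_ge0.
    by rewrite nnegrE ltW.
  have P0 : 0 <= powR b alpha by apply: powR_ge0.
  have h6 : powR b alpha * powR b (1 - alpha) <= powR b alpha * k by rewrite ler_wpM2l.
  rewrite /k in h6.
  nra.
have nT0 : 0 < x - r by rewrite subr_gt0.
have nS0 : 0 < f x - f r by rewrite subr_gt0; apply: inc.
have hDz : f r - f x - D * (r - x) = 0.
  apply/eqP; apply/negP => /negP hz.
  have ep : 0 < `|f r - f x - D * (r - x)| / (2 * (x - r)).
    by rewrite divr_gt0 ?normr_gt0 // mulr_gt0.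
  have [d d0 Hd1] := H1 _ ep.
  have := Hd1 x Tx; rewrite subrr normr0 => /(_ d0); rewrite rT.
  rewrite [`|r - x|]distrC (gtr0_norm nT0).
  have -> : `|f r - f x - D * (r - x)| / (2 * (x - r)) * (x - r) =
            `|f r - f x - D * (r - x)| / 2.
    by field; rewrite gt_eqF.
  have := normr_gt0 (f r - f x - D * (r - x)); rewrite hz => /= hp.
  lra.
have e1 : D * (x - r) = f x - f r.
  move: hDz; have -> : r - x = - (x - r) by rewrite opprB.
  rewrite mulrN; lra.
have hD : D = (f x - f r) / (x - r) by rewrite -e1 mulfK // gt_eqF.
have Dp : 0 < D by rewrite hD divr_gt0.
have nuS : nu S (f x) = f x - f r by rewrite /nu rS.
have LE : (if alpha != 1 then powR (f x - f r) (1 - alpha) / D else 1 / D)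
    = powR (f x - f r) (1 - alpha) / D.
  by case: eqVneq => // ->; rewrite subrr powRr0.
split => // e e0; rewrite rS nuS LE Hinv //.
pose L := powR (f x - f r) (1 - alpha) / D.
have LP : L * powR (f x - f r) alpha = x - r.
  rewrite /L mulrAC -powRD; last by apply/implyP => _; rewrite gt_eqF.
  by rewrite subrK powRr1 ?ltW // hD; field; rewrite !gt_eqF.
case: asboolP => qa; last first.
  exists (f x - f r) => // _ [[y Ty <-]] /andP[h1 h2].
  have yx := mono_lt inc Ty Tx h2.
  have := mono_le inc Ty Tr (hr y Ty yx); lra.
pose P0 := powR (f x - f r) alpha.
have P00 : 0 < P0 by apply: powR_gt0.
have eta0 : 0 < e * P0 / 2 by rewrite divr_gt0 ?mulr_gt0.
have [d1 d10 Hc] := finv_cont f x cT inc Tx eta0.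
have dd : 0 < e * P0 * D / 2 by rewrite divr_gt0 ?mulr_gt0.
pose dm := Num.min (Num.min (f x - f r) d1) (e * P0 * D / 2).
have m1 : dm <= f x - f r by rewrite /dm !ge_min lexx.
have m2 : dm <= d1 by rewrite /dm !ge_min lexx orbT.
have m3 : dm <= e * P0 * D / 2 by rewrite /dm !ge_min lexx orbT.
exists dm; first by rewrite !lt_min nS0 d10 dd.
move=> _ [[y Ty <-]] /andP[h1 h2].
rewrite Hinv //.
have xy : x <= y.
  rewrite leNgt; apply/negP => yx.
  have := mono_le inc Ty Tr (hr y Ty yx); lra.
have hy : `|y - x| < e * P0 / 2 by apply: Hc => //; rewrite ltr_distlC; apply/andP; split; lra.
rewrite ger0_norm ?subr_ge0 // in hy.
have fxy : f x <= f y by exact: (mono_le inc Tx Ty xy).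
rewrite fpow_neg //; last lra.
have fyr : 0 <= f y - f r by lra.
rewrite fpow_abs // opprB [`|f r - f y|]distrC (ger0_norm fyr).
rewrite -/L.
pose q := (f y - f r) / (f x - f r).
have q1 : 1 <= q by rewrite /q ler_pdivlMr // mul1r; lra.
have wE : f y - f r = (f x - f r) * q by rewrite /q mulrC divfK // gt_eqF.
rewrite wE powRM ?ltW //; last lra.
pose pq := powR q alpha.
have pq1 : 1 <= pq.
  by rewrite /pq -(powRr0 q); apply: ler_powR => //; rewrite ltW.
have pqq : pq <= q by apply: ler1_powR.
have -> : r - y - L * - (powR (f x - f r) alpha * powR q alpha) =
          (x - r) * (pq - 1) - (y - x).
  by rewrite mulrN opprK mulrA LP /pq; ring.
have hq : (x - r) * (q - 1) = (f y - f x) / D.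
  by rewrite /q hD; field; rewrite !gt_eqF.
have hq2 : (f y - f x) / D < e * P0 / 2.
  by rewrite ltr_pdivrMr // mulrAC; lra.
have m4 : (x - r) * (pq - 1) <= (x - r) * (q - 1).
  by apply: ler_wpM2l; lra.
have m5 : 0 <= (x - r) * (pq - 1) by apply: mulr_ge0; lra.
have m6 : e * P0 <= e * (P0 * pq).
  apply: ler_wpM2l; first lra.
  by rewrite ler_peMr; lra.
rewrite -/P0 -/pq ltr_norml; apply/andP; split; lra.
Qed.
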